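(* Let $X\subseteq\mathbb{R}^n$ be an $\ell_1$-convex set and $\lambda>0$. Then the set \[ X_\lambda=\bigcup\{\lambda(h+Q_n): h\in\mathbf{H}^n,\ \lambda(h+Q_n)\cap X\neq\emptyset\} \] is $\ell_1$-convex.
   Context: $Q_n=[-\tfrac12,\tfrac12]^n$ and $\mathbf{H}=\{m+\tfrac12: m\in\mathbb{Z}\}$ is the set of half-integers. A subset $Z\subseteq\mathbb{R}^n$ is $\ell_1$-convex if for all $z,z'\in Z$, with $D=\sum_i|z_i-z'_i|$, there is $\gamma\colon[0,D]\to Z$ with $\gamma(0)=z,\gamma(D)=z'$ and $\sum_i|\gamma_i(t)-\gamma_i(t')|=|t-t'|$ for all $t,t'$. *)

(* Defs.v *)
From mathcomp Require Import all_boot all_order all_algebra.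
From mathcomp Require Import reals.
Set Implicit Arguments. Unset Strict Implicit. Unset Printing Implicit Defensive.
Import Order.TTheory GRing.Theory Num.Theory.
Local Open Scope ring_scope.

Definition point (R : realType) (n : nat) := 'I_n -> R.

Definition l1dist (R : realType) (n : nat) (x y : point R n) : R :=
  \sum_(i < n) `|x i - y i|.

Definition l1_convex (R : realType) (n : nat) (Z : point R n -> Prop) : Prop :=
  forall z z' : point R n, Z z -> Z z' ->
    let D := l1dist z z' in
    exists gamma : R -> point R n,
      gamma 0 = z /\ gamma D = z' /\
      (forall t, 0 <= t <= D -> Z (gamma t)) /\
      (forall t t', 0 <= t <= D -> 0 <= t' <= D ->
         l1dist (gamma t) (gamma t') = `|t - t'|).

Definition half_int (R : realType) (x : R) : Prop :=
  exists m : int, x = m%:~R + 2^-1.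

Definition scaled_cube (R : realType) (n : nat) (lambda : R) (h : point R n)
  : point R n -> Prop :=
  fun x => exists q : point R n,
    (forall i, - 2^-1 <= q i <= 2^-1) /\ (forall i, x i = lambda * (h i + q i)).

Definition X_lambda (R : realType) (n : nat) (X : point R n -> Prop) (lambda : R)
  : point R n -> Prop :=
  fun x => exists h : point R n,
    (forall i, half_int (h i)) /\
    (exists y, scaled_cube lambda h y /\ X y) /\
    scaled_cube lambda h x.

(* Main.v *)
Require Import Defs.
From mathcomp Require Import all_boot all_order all_algebra.
From mathcomp Require Import reals.
From mathcomp Require Import boolp classical_sets topology normedtype.
From mathcomp Require Import ring lra.
Require Import Defs.
Import Order.TTheory GRing.Theory Num.Theory.
Import numFieldNormedType.Exports.
Local Open Scope ring_scope.
Set Implicit Arguments. Unset Strict Implicit.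

Definition cellrel (R : realType) (lam u s : R) := exists k : int,
  (lam * k%:~R <= u /\ u <= lam * (k%:~R + 1)) /\
  (lam * k%:~R <= s /\ s <= lam * (k%:~R + 1)).

Definition clamp (R : realType) (p q s : R) := Num.max p (Num.min s q).

Lemma C_refl (R : realType) (lam s : R) : 0 < lam -> cellrel lam s s.
Proof.
move=> l0; exists (Num.floor (s / lam)).
have H1 := floor_le (s/lam); have H2 := floorD1_gt (s/lam).
rewrite intrD in H2.
have e : s / lam * lam = s by rewrite divfK // gt_eqF.
set k := (Num.floor (s / lam))%:~R in H1 H2 *.
have A : lam * k <= s by nra.
have B : s <= lam * (k + 1) by nra.
by split; split.
Qed.

Lemma C_conv (R : realType) (lam a b u s : R) :
  cellrel lam a s -> cellrel lam b s -> a <= u -> u <= b -> cellrel lam u s.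
Proof.
move=> [k [[h1 h2] [h3 h4]]] [k' [[h1' h2'] [h3' h4']]] au ub.
case: (lerP u s) => us.
  by exists k; split; split; lra.
by exists k'; split; split; lra.
Qed.

Lemma C_neg (R : realType) (lam u s : R) :
  cellrel lam u s -> cellrel lam (- u) (- s).
Proof.
move=> [k [[h1 h2] [h3 h4]]]; exists (- k - 1).
rewrite intrB intrN /=.
have e : lam * (- k%:~R - 1%:~R + 1) = - (lam * (k%:~R + 1)) + lam by rewrite /=; ring.
have e2 : lam * (- k%:~R - 1%:~R) = - (lam * (k%:~R + 1)) by ring.
rewrite e e2; split; split; lra.
Qed.

Lemma C_clamp (R : realType) (lam p q a b s : R) : 0 < lam -> p <= q ->
  cellrel lam p a -> cellrel lam q b -> a <= s -> s <= b ->
  cellrel lam (clamp p q s) s.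
Proof.
move=> l0 pq [k [[h1 h2] [h3 h4]]] [k' [[h1' h2'] [h3' h4']]] as_ sb.
rewrite /clamp.
case: (ltrP s p) => sp.
  rewrite (min_l (ltW (lt_le_trans sp pq))) (max_l (ltW sp)).
  by exists k; split; split; lra.
case: (ltrP q s) => qs.
  rewrite (max_r pq).
  by exists k'; split; split; lra.
rewrite (max_r sp); exact: C_refl.
Qed.

Lemma C_dec (R : realType) (lam p q a b s u : R) : p <= q ->
  cellrel lam p a -> cellrel lam q b -> b <= s -> s <= a -> p <= u -> u <= q ->
  cellrel lam u s.
Proof.
move=> pq [k [[h1 h2] [h3 h4]]] [k' [[h1' h2'] [h3' h4']]] bs sa pu uq.
case: (lerP u s) => us.
  by exists k; split; split; lra.
by exists k'; split; split; lra.
Qed.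

Lemma absge (R : realType) (y : R) : y <= `|y| /\ - y <= `|y|.
Proof. split; [exact: ler_norm | by rewrite -normrN ler_norm]. Qed.

Lemma absle (R : realType) (x z : R) : - z <= x -> x <= z -> `|x| <= z.
Proof. by move=> h1 h2; rewrite ler_norml h1 h2. Qed.

Lemma max_lip (R : realType) (a s s' : R) :
  `|Num.max a s - Num.max a s'| <= `|s - s'|.
Proof.
have [u1 u2] := absge (s - s').
case: (lerP a s) => h; case: (lerP a s') => h'; apply: absle; lra.
Qed.

Lemma min_lip (R : realType) (a s s' : R) :
  `|Num.min s a - Num.min s' a| <= `|s - s'|.
Proof.
have [u1 u2] := absge (s - s').
case: (lerP s a) => h; case: (lerP s' a) => h'; apply: absle; lra.
Qed.

Lemma clamp_lip (R : realType) (p q s s' : R) :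
  `|clamp p q s - clamp p q s'| <= `|s - s'|.
Proof. rewrite /clamp; apply: le_trans (max_lip _ _ _) (min_lip _ _ _). Qed.

Lemma clamp_mono (R : realType) (p q s s' : R) : s <= s' -> clamp p q s <= clamp p q s'.
Proof.
rewrite /clamp => ss.
case: (lerP s q) => h; case: (lerP s' q) => h'; case: (lerP p s) => h2;
  case: (lerP p s') => h3; case: (lerP p q) => h4; lra.
Qed.

Lemma clamp_ge (R : realType) (p q s : R) : p <= clamp p q s.
Proof. by rewrite /clamp le_max lexx. Qed.

Lemma clamp_le (R : realType) (p q s : R) : p <= q -> clamp p q s <= q.
Proof. by rewrite /clamp ge_max => ->; rewrite ge_min lexx orbT. Qed.

Definition tau (R : realType) (D t : R) := Num.max 0 (Num.min (t - 1) D).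

Lemma tau_range (R : realType) (D t : R) : 0 <= D -> 0 <= tau D t /\ tau D t <= D.
Proof. rewrite /tau => D0; case: (lerP (t - 1) D) => h; case: (lerP 0 (t-1)) => h2;
  try case: (lerP 0 D) => h3; lra. Qed.

Lemma tau_mono (R : realType) (D t t' : R) : t <= t' -> tau D t <= tau D t'.
Proof. rewrite /tau => tt; case: (lerP (t - 1) D) => h; case: (lerP (t' - 1) D) => h';
  case: (lerP 0 (t-1)) => h2; case: (lerP 0 (t'-1)) => h3; try case: (lerP 0 D) => h4; lra. Qed.

Lemma tau_lip (R : realType) (D t t' : R) : `|tau D t - tau D t'| <= `|t - t'|.
Proof.
rewrite /tau; apply: le_trans (max_lip _ _ _) _; apply: le_trans (min_lip _ _ _) _.
by rewrite opprB addrA subrK.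
Qed.

Lemma tau_lo (R : realType) (D t : R) : 0 <= D -> t <= 1 -> tau D t = 0.
Proof. rewrite /tau => D0 t1; rewrite (min_l (_ : t - 1 <= D)) ?max_l //; lra. Qed.

Lemma tau_mid (R : realType) (D t : R) : 1 <= t -> t <= 1 + D -> tau D t = t - 1.
Proof. rewrite /tau => t1 t2; rewrite (min_l (_ : t - 1 <= D)) ?max_r //; lra. Qed.

Lemma tau_hi (R : realType) (D t : R) : 0 <= D -> 1 + D <= t -> tau D t = D.
Proof. rewrite /tau => D0 t1; rewrite (min_r (_ : D <= t - 1)) ?max_r //; lra. Qed.

Definition gmono (R : realType) (D : R) (g : R -> R) := forall t t', 0 <= t -> t <= t' -> t' <= D ->
  (g 0 <= g D -> g t <= g t') /\ (g D <= g 0 -> g t' <= g t).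

Definition glip (R : realType) (D : R) (g : R -> R) := forall t t', 0 <= t -> t <= D -> 0 <= t' -> t' <= D ->
  `|g t - g t'| <= `|t - t'|.

Lemma coord_le (R : realType) (lam D p q : R) (g : R -> R) : 0 < lam -> 0 <= D -> p <= q ->
  gmono D g -> glip D g -> cellrel lam p (g 0) -> cellrel lam q (g D) ->
  exists v : R -> R, v 0 = p /\ v (D + 2) = q /\
   (forall t t', 0 <= t -> t <= t' -> t' <= D + 2 -> v t <= v t') /\
   (exists K, 0 <= K /\ forall t t', `|v t - v t'| <= K * `|t - t'|) /\
   (forall t, 0 <= t -> t <= D + 2 -> cellrel lam (v t) (g (tau D t))).
Proof.
move=> l0 D0 pq Hm Hl Cp Cq.
case: (lerP (g 0) (g D)) => gdir.
-
  have gin : forall s, 0 <= s -> s <= D -> g 0 <= g s /\ g s <= g D.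
    move=> s s0 sD; split; first exact: ((Hm 0 s (lexx _) s0 sD).1 gdir).
    exact: ((Hm s D s0 sD (lexx _)).1 gdir).
  have gm : forall s s', 0 <= s -> s <= s' -> s' <= D -> g s <= g s'.
    by move=> s s' h1 h2 h3; exact: ((Hm s s' h1 h2 h3).1 gdir).
  set c0 := clamp p q (g 0); set c1 := clamp p q (g D).
  exists (fun t => clamp p q (g (tau D t)) + Num.max 0 (1 - t) * (p - c0)
                  + Num.max 0 (t - 1 - D) * (q - c1)).
  have pc0 : p <= c0 by exact: clamp_ge.
  have c1q : c1 <= q by exact: clamp_le.
  split.
    rewrite tau_lo // ?ler01 // (max_r (_ : 0 <= 1 - 0)) ?subr0 ?ler01 //.
    rewrite (max_l (_ : 0 - 1 - D <= 0)); last lra.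
    rewrite -/c0; ring.
  split.
    rewrite tau_hi //; last lra.
    rewrite (max_l (_ : 1 - (D + 2) <= 0)); last lra.
    rewrite (max_r (_ : 0 <= D + 2 - 1 - D)); last lra.
    rewrite -/c1; ring.
  split.
    move=> t t' t0 tt tD /=.
    have T1 : clamp p q (g (tau D t)) <= clamp p q (g (tau D t')).
      apply: clamp_mono; have [r1 r2] := tau_range t D0; have [r1' r2'] := tau_range t' D0.
      by apply: gm => //; apply: tau_mono.
    have M1 : Num.max 0 (1 - t') <= Num.max 0 (1 - t).
      case: (lerP 0 (1 - t)) => h; case: (lerP 0 (1 - t')) => h'; lra.
    have M2 : Num.max 0 (t - 1 - D) <= Num.max 0 (t' - 1 - D).
      case: (lerP 0 (t - 1 - D)) => h; case: (lerP 0 (t' - 1 - D)) => h'; lra.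
    nra.
  split.
    exists (1 + `|p - c0| + `|q - c1|); split.
      by rewrite !addr_ge0.
    move=> t t' /=.
    set A := clamp p q _; set A' := clamp p q _.
    set m := Num.max 0 (1 - t); set m' := Num.max 0 (1 - t').
    set w := Num.max 0 (t - 1 - D); set w' := Num.max 0 (t' - 1 - D).
    have hA : `|A - A'| <= `|t - t'|.
      apply: le_trans (clamp_lip _ _ _ _) _.
      have [r1 r2] := tau_range t D0; have [r1' r2'] := tau_range t' D0.
      by apply: le_trans (Hl _ _ r1 r2 r1' r2') (tau_lip _ _ _).
    have hm : `|m - m'| <= `|t - t'|.
      apply: le_trans (max_lip _ _ _) _; rewrite (_ : 1 - t - (1 - t') = t' - t); last ring. by rewrite distrC.
    have hw : `|w - w'| <= `|t - t'|.
      apply: le_trans (max_lip _ _ _) _.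
      by rewrite (_ : t - 1 - D - (t' - 1 - D) = t - t') //; ring.
    have e : A + m * (p - c0) + w * (q - c1) - (A' + m' * (p - c0) + w' * (q - c1))
      = (A - A') + (m - m') * (p - c0) + (w - w') * (q - c1) by ring.
    rewrite e; apply: le_trans (ler_normD _ _) _.
    rewrite !mulrDl mul1r; apply: lerD.
      apply: le_trans (ler_normD _ _) _; apply: lerD => //.
      by rewrite mulNr -mulrBl normrM mulrC ler_wpM2l.
    by rewrite mulNr -mulrBl normrM mulrC ler_wpM2l.
  move=> t t0 tD /=.
  have Cc0 : cellrel lam c0 (g 0).
    by apply: (C_clamp l0 pq Cp Cq) => //.
  have Cc1 : cellrel lam c1 (g D).
    by apply: (C_clamp l0 pq Cp Cq) => //.
  case: (lerP t 1) => t1.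
    rewrite tau_lo // (max_l (_ : t - 1 - D <= 0)); last lra.
    rewrite (max_r (_ : 0 <= 1 - t)); last lra.
    apply: (C_conv Cp Cc0); rewrite -/c0; nra.
  case: (lerP t (1 + D)) => t2.
    rewrite (max_l (_ : t - 1 - D <= 0)); last lra.
    rewrite (max_l (_ : 1 - t <= 0)); last lra.
    rewrite !mul0r !addr0.
    have [r1 r2] := tau_range t D0.
    have [g1 g2] := gin _ r1 r2.
    exact: (C_clamp l0 pq Cp Cq g1 g2).
  rewrite tau_hi //; last lra.
  rewrite (max_r (_ : 0 <= t - 1 - D)); last lra.
  rewrite (max_l (_ : 1 - t <= 0)); last lra.
  rewrite mul0r addr0.
  apply: (C_conv Cc1 Cq); rewrite -/c1; nra.
-
  have gin : forall s, 0 <= s -> s <= D -> g D <= g s /\ g s <= g 0.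
    move=> s s0 sD; split; first exact: ((Hm s D s0 sD (lexx _)).2 (ltW gdir)).
    exact: ((Hm 0 s (lexx _) s0 sD).2 (ltW gdir)).
  have T0 : 0 < D + 2 by lra.
  exists (fun t => p + (q - p) * (t / (D + 2))).
  split; first by rewrite mul0r mulr0 addr0.
  split; first by rewrite divff ?gt_eqF // mulr1 addrC subrK.
  split.
    move=> t t' t0 tt tD /=.
    have : t / (D + 2) <= t' / (D + 2) by rewrite ler_pM2r // invr_gt0.
    nra.
  split.
    exists (`|q - p| / (D + 2)); split; first by rewrite divr_ge0 // ltW.
    move=> t t' /=.
    rewrite (_ : p + (q - p) * (t / (D + 2)) - (p + (q - p) * (t' / (D + 2)))
       = (q - p) * (t - t') / (D + 2)); last by field; rewrite gt_eqF.
    rewrite normrM normrM normfV (gtr0_norm T0).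
    by rewrite mulrAC.
  move=> t t0 tD /=.
  have [r1 r2] := tau_range t D0.
  have [g1 g2] := gin _ r1 r2.
  have f0 : 0 <= t / (D + 2) by rewrite divr_ge0 // ltW.
  have f1 : t / (D + 2) <= 1 by rewrite ler_pdivrMr // mul1r.
  apply: (C_dec pq Cp Cq g1 g2); nra.
Qed.

Lemma coord (R : realType) (lam D p q : R) (g : R -> R) : 0 < lam -> 0 <= D ->
  gmono D g -> glip D g -> cellrel lam p (g 0) -> cellrel lam q (g D) ->
  exists v : R -> R, v 0 = p /\ v (D + 2) = q /\
   (forall t t', 0 <= t -> t <= t' -> t' <= D + 2 ->
      (p <= q -> v t <= v t') /\ (q < p -> v t' <= v t)) /\
   (exists K, 0 <= K /\ forall t t', `|v t - v t'| <= K * `|t - t'|) /\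
   (forall t, 0 <= t -> t <= D + 2 -> cellrel lam (v t) (g (tau D t))).
Proof.
move=> l0 D0 Hm Hl Cp Cq.
case: (lerP p q) => pq.
  have [v [v0 [v1 [vm [vK vC]]]]] := coord_le l0 D0 pq Hm Hl Cp Cq.
  exists v; do 2 split => //; split => //.
  move=> t t' h1 h2 h3; split; [move=> _; exact: vm | move=> qp; exfalso; lra].
have pq' : - p <= - q by rewrite lerN2 ltW.
have Hm' : gmono D (fun t => - g t).
  move=> t t' h1 h2 h3; have [a b] := Hm t t' h1 h2 h3.
  by split; rewrite !lerN2; [apply: b | apply: a].
have Hl' : glip D (fun t => - g t).
  by move=> t t' h1 h2 h3 h4 /=; rewrite -opprD normrN; apply: Hl.
have [v [v0 [v1 [vm [[K [K0 vK]] vC]]]]] :=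
  coord_le l0 D0 pq' Hm' Hl' (C_neg Cp) (C_neg Cq).
exists (fun t => - v t); split; first by rewrite v0 opprK.
split; first by rewrite v1 opprK.
split.
  move=> t t' h1 h2 h3; split => h; first lra.
  by rewrite lerN2; apply: vm.
split.
  by exists K; split => // t t'; rewrite -opprD normrN.
move=> t h1 h2; have := C_neg (vC t h1 h2); by rewrite opprK.
Qed.

Lemma between (R : realType) (a b c : R) : `|a - b| + `|b - c| = `|a - c| ->
  (a <= c -> a <= b <= c) /\ (c <= a -> c <= b <= a).
Proof.
move=> E; have [h1 h2] := absge (a - b); have [h3 h4] := absge (b - c).
have [h5 h6] := absge (a - c).
split=> ac.
  have e3 : `|a - c| = c - a by rewrite distrC ger0_norm // subr_ge0.
  apply/andP; split; rewrite leNgt; apply/negP => H; lra.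
have e3 : `|a - c| = a - c by rewrite ger0_norm // subr_ge0.
apply/andP; split; rewrite leNgt; apply/negP => H; lra.
Qed.

Lemma term_le_l1 (R : realType) (n : nat) (x y : point R n) (i : 'I_n) :
  `|x i - y i| <= l1dist x y.
Proof.
rewrite /l1dist (bigD1 i) //= lerDl; exact: sumr_ge0.
Qed.

Lemma l1dist_ge0 (R : realType) (n : nat) (x y : point R n) : 0 <= l1dist x y.
Proof. exact: sumr_ge0. Qed.

Lemma l1distC (R : realType) (n : nat) (x y : point R n) : l1dist x y = l1dist y x.
Proof. by apply: eq_bigr => i _; rewrite distrC. Qed.

Lemma l1dist_eq0 (R : realType) (n : nat) (x y : point R n) : l1dist x y = 0 -> x = y.
Proof.
move=> E; apply: funext => i; apply/eqP; rewrite -subr_eq0 -normr_eq0; apply/eqP.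
by apply: (psumr_eq0P _ E) => // j _.
Qed.

Lemma geo_split (R : realType) (n : nat) (a b c : point R n) :
  l1dist a b + l1dist b c = l1dist a c -> forall i, `|a i - b i| + `|b i - c i| = `|a i - c i|.
Proof.
move=> E i.
have H : \sum_(j < n) (`|a j - b j| + `|b j - c j| - `|a j - c j|) = 0.
  by rewrite sumrB big_split /= -/(l1dist a b) -/(l1dist b c) -/(l1dist a c) E subrr.
have nn : forall j : 'I_n, true -> 0 <= `|a j - b j| + `|b j - c j| - `|a j - c j|.
  by move=> j _; rewrite subr_ge0 ler_distD.
by move: (psumr_eq0P nn H) => /(_ i isT) /eqP; rewrite subr_eq0 => /eqP.
Qed.

Definition geod (R : realType) (n : nat) (D : R) (gam : R -> point R n) :=
  forall t t', 0 <= t <= D -> 0 <= t' <= D -> l1dist (gam t) (gam t') = `|t - t'|.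

Lemma geo_props (R : realType) (n : nat) (D : R) (gam : R -> point R n) :
  0 <= D -> geod D gam -> forall i, gmono D (fun t => gam t i) /\ glip D (fun t => gam t i).
Proof.
move=> D0 G i; split; last first.
  move=> t t' h1 h2 h3 h4 /=; apply: le_trans (term_le_l1 (gam t) (gam t') i) _; rewrite G ?h1 ?h2 ?h3 ?h4 //.
have tri : forall t1 t2 t3, 0 <= t1 -> t1 <= t2 -> t2 <= t3 -> t3 <= D ->
    `|gam t1 i - gam t2 i| + `|gam t2 i - gam t3 i| = `|gam t1 i - gam t3 i|.
  move=> t1 t2 t3 h1 h2 h3 h4; apply: geo_split.
  have b1 : 0 <= t1 <= D by rewrite h1 (le_trans h2 (le_trans h3 h4)).
  have b2 : 0 <= t2 <= D by rewrite (le_trans h1 h2) (le_trans h3 h4).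
  have b3 : 0 <= t3 <= D by rewrite (le_trans (le_trans h1 h2) h3) h4.
  rewrite !G ?b1 ?b2 ?b3 //.
  rewrite distrC (ger0_norm (_ : 0 <= t2 - t1)) ?subr_ge0 //.
  rewrite distrC (ger0_norm (_ : 0 <= t3 - t2)) ?subr_ge0 //.
  rewrite distrC (ger0_norm (_ : 0 <= t3 - t1)) ?subr_ge0 ?(le_trans h2 h3) //.
  ring.
move=> t t' h1 h2 h3 /=.
have B1 := between (tri 0 t' D (lexx _) (le_trans h1 h2) h3 (lexx _)).
have B2 := between (tri 0 t t' (lexx _) h1 h2 h3).
split=> yy.
  have /andP [a1 a2] := B1.1 yy.
  by have /andP [] := B2.1 a1.
have /andP [a1 a2] := B1.2 yy.
by have /andP [] := B2.2 a2.
Qed.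

Lemma lip_cont (R: realType) (f : R -> R) (K : R) : 0 <= K ->
  (forall s t, `|f s - f t| <= K * `|s - t|) -> continuous f.
Proof.
move=> K0 Hf x; apply/cvgrPdist_lt => e e0.
apply/nbhs_ballP; exists (e / (K+1)) => /=.
  by rewrite divr_gt0 // ltr_pwDr.
move=> y; rewrite /ball /= => hy; apply: (le_lt_trans (Hf x y)).
have K1 : 0 < K + 1 by rewrite ltr_pwDr.
have h0 : 0 <= `|x - y| by [].
have : (K+1) * `|x - y| < e by rewrite mulrC -ltr_pdivlMr.
nra.
Qed.

Lemma dist_le (R : realType) (a b : R) : a <= b -> `|a - b| = b - a.
Proof. by move=> ab; rewrite distrC ger0_norm // subr_ge0. Qed.

Lemma dist_ge (R : realType) (a b : R) : b <= a -> `|a - b| = a - b.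
Proof. by move=> ab; rewrite ger0_norm // subr_ge0. Qed.

Lemma reparam (R : realType) (n : nat) (Z : point R n -> Prop) (x x' : point R n)
  (T : R) (u : R -> point R n) :
  0 <= T -> u 0 = x -> u T = x' ->
  (forall i t t', 0 <= t -> t <= t' -> t' <= T ->
     (x i <= x' i -> u t i <= u t' i) /\ (x' i < x i -> u t' i <= u t i)) ->
  (forall i, exists K, 0 <= K /\ forall t t', `|u t i - u t' i| <= K * `|t - t'|) ->
  (forall t, 0 <= t -> t <= T -> Z (u t)) ->
  exists gamma : R -> point R n, gamma 0 = x /\ gamma (l1dist x x') = x' /\
    (forall t, 0 <= t <= l1dist x x' -> Z (gamma t)) /\
    (forall t t', 0 <= t <= l1dist x x' -> 0 <= t' <= l1dist x x' ->
       l1dist (gamma t) (gamma t') = `|t - t'|).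
Proof.
move=> T0 u0 uT Hm Hl HZ.
set D := l1dist x x'.
pose L t := l1dist x (u t).
have ux : forall i, u 0 i = x i by move=> i; rewrite u0.
have A : forall t t', 0 <= t -> t <= t' -> t' <= T -> l1dist (u t) (u t') = L t' - L t.
  move=> t t' h1 h2 h3; rewrite /L /l1dist -sumrB; apply: eq_bigr => i _.
  have [m1 m2] := Hm i 0 t (lexx 0) h1 (le_trans h2 h3).
  have [m3 m4] := Hm i t t' h1 h2 h3.
  rewrite ux in m1 m2.
  case: (lerP (x i) (x' i)) => d.
    have a1 := m1 d; have a2 := m3 d.
    rewrite (dist_le a2) (dist_le a1) (dist_le (le_trans a1 a2)); ring.
  have a1 := m2 d; have a2 := m4 d.
  rewrite (dist_ge a2) (dist_ge a1) (dist_ge (le_trans a2 a1)); ring.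
have [Kf HK] := choice Hl.
have Llip : forall t t', `|L t - L t'| <= (\sum_(i < n) Kf i) * `|t - t'|.
  move=> t t'; rewrite /L /l1dist -sumrB mulr_suml.
  apply: le_trans (ler_norm_sum _ _ _) _; apply: ler_sum => i _.
  apply: le_trans (ler_dist_dist _ _) _.
  rewrite (_ : x i - u t i - (x i - u t' i) = u t' i - u t i); last ring.
  by rewrite distrC; case: (HK i) => _ ->.
have Kge : 0 <= \sum_(i < n) Kf i by apply: sumr_ge0 => i _; case: (HK i).
have Lc : {within `[0, T], continuous L}%classic.
  by apply: continuous_subspaceT; exact: lip_cont Kge Llip.
have L0 : L 0 = 0.
  by rewrite /L u0 /l1dist big1 // => i _; rewrite subrr normr0.
have LT : L T = D by rewrite /L uT.
have D0 : 0 <= D by exact: l1dist_ge0.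
have cs : forall s, exists c, 0 <= s <= D -> (0 <= c <= T /\ L c = s).
  move=> s; case: (boolP (0 <= s <= D)) => hs; last by exists 0.
  have [c hc Lcs] : exists2 c, c \in `[0, T] & L c = s.
    apply: IVT => //; rewrite L0 LT (min_l D0) (max_r D0) //.
  by exists c => _; rewrite in_itv /= in hc; split.
have [tf Htf] := choice cs.
have Tf : forall s, 0 <= s <= D -> 0 <= tf s <= T /\ L (tf s) = s.
  by move=> s hs; apply: Htf.
exists (fun s => u (tf s)).
have hD0 : (0:R) <= 0 <= D by apply/andP; split.
have hDD : 0 <= D <= D by apply/andP; split.
split.
  have [/andP [a1 a2] a3] := Tf 0 hD0.
  symmetry; apply: l1dist_eq0; exact: a3.
split.
  have [/andP [a1 a2] a3] := Tf D hDD.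
  apply: l1dist_eq0; rewrite -uT A // a3 LT subrr //.
split.
  move=> t ht; have [/andP [a1 a2] _] := Tf t ht; exact: HZ.
move=> t t' ht ht'.
have [/andP [a1 a2] a3] := Tf t ht; have [/andP [b1 b2] b3] := Tf t' ht'.
case: (lerP (tf t) (tf t')) => tt.
  rewrite A // a3 b3 distrC ger0_norm //.
  by rewrite -b3 -a3 -A // l1dist_ge0.
rewrite l1distC (A _ _ b1 (ltW tt) a2) a3 b3 ger0_norm //.
by have := l1dist_ge0 (u (tf t')) (u (tf t)); rewrite (A _ _ b1 (ltW tt) a2) a3 b3 subr_ge0.
Qed.

Lemma cube_cellrel (R : realType) (n : nat) (lam : R) (h z w : point R n) : 0 < lam ->
  (forall i, half_int (h i)) -> scaled_cube lam h z -> scaled_cube lam h w ->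
  forall i, cellrel lam (z i) (w i).
Proof.
move=> l0 Hh [q [Hq Hz]] [q' [Hq' Hw]] i.
have [m hm] := Hh i; exists m.
have /andP [a1 a2] := Hq i; have /andP [b1 b2] := Hq' i.
rewrite Hz Hw hm.
have t2 : 2^-1 + 2^-1 = 1 :> R by rewrite [RHS](splitr 1) mul1r.
split; split; nra.
Qed.

Lemma cellrel_cube (R : realType) (n : nat) (lam : R) (z w : point R n) : 0 < lam ->
  (forall i, cellrel lam (z i) (w i)) ->
  exists h, (forall i, half_int (h i)) /\ scaled_cube lam h z /\ scaled_cube lam h w.
Proof.
move=> l0 Hc; have [kf Hk] := choice Hc.
have t2 : 2^-1 + 2^-1 = 1 :> R by rewrite [RHS](splitr 1) mul1r.
have ln : lam != 0 by rewrite gt_eqF.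
exists (fun i => (kf i)%:~R + 2^-1); split; first by move=> i; exists (kf i).
have cub : forall p : point R n, (forall i, lam * (kf i)%:~R <= p i /\ p i <= lam * ((kf i)%:~R + 1)) ->
    scaled_cube lam (fun i => (kf i)%:~R + 2^-1) p.
  move=> p Hp; exists (fun i => p i / lam - ((kf i)%:~R + 2^-1)); split; last first.
    by move=> i; rewrite addrC subrK mulrC divfK.
  move=> i; have [a1 a2] := Hp i.
  have e : p i / lam * lam = p i by rewrite divfK.
  set r := p i / lam in e *.
  have b1 : (kf i)%:~R <= r by nra.
  have b2 : r <= (kf i)%:~R + 1 by nra.
  apply/andP; split; lra.
split; apply: cub => i; have [[a1 a2] [a3 a4]] := Hk i; by split.
Qed.

Theorem proposition3p1 (R : realType) (n : nat) (X : point R n -> Prop) (lambda : R) :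
  l1_convex X -> 0 < lambda -> l1_convex (X_lambda X lambda).
Proof.
move=> HX l0 x x' [h [Hh [[y [Hyc Hy]] Hxc]]] [h' [Hh' [[y' [Hyc' Hy']] Hxc']]].
have [gam [g0 [gD [gZ gd]]]] := HX y y' Hy Hy'.
set D := l1dist y y' in gD gZ gd.
have D0 : 0 <= D by exact: l1dist_ge0.
have Gp := geo_props D0 gd.
have Cx := cube_cellrel l0 Hh Hxc Hyc.
have Cx' := cube_cellrel l0 Hh' Hxc' Hyc'.
have cs : forall i, exists v : R -> R, v 0 = x i /\ v (D + 2) = x' i /\
   (forall t t', 0 <= t -> t <= t' -> t' <= D + 2 ->
      (x i <= x' i -> v t <= v t') /\ (x' i < x i -> v t' <= v t)) /\
   (exists K, 0 <= K /\ forall t t', `|v t - v t'| <= K * `|t - t'|) /\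
   (forall t, 0 <= t -> t <= D + 2 -> cellrel lambda (v t) (gam (tau D t) i)).
  move=> i; have [Gm Gl] := Gp i.
  apply: (coord (g := fun t => gam t i)) l0 D0 Gm Gl _ _.
    by rewrite /= g0.
  by rewrite /= gD.
have [V HV] := choice cs.
have T0 : 0 <= D + 2 by lra.
apply: (reparam (u := fun t i => V i t) T0).
- by apply: funext => i; case: (HV i).
- by apply: funext => i; case: (HV i) => _ [].
- by move=> i t t' h1 h2 h3; case: (HV i) => _ [_ [Hm _]]; apply: Hm.
- by move=> i; case: (HV i) => _ [_ [_ [HK _]]].
move=> t t0 tT.
have [r1 r2] := tau_range t D0.
have Cc : forall i, cellrel lambda (V i t) (gam (tau D t) i).
  by move=> i; case: (HV i) => _ [_ [_ [_ HC]]]; apply: HC.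
have [hh [Hhh [c1 c2]]] := cellrel_cube l0 Cc.
exists hh; split => //; split => //.
exists (gam (tau D t)); split => //.
by apply: gZ; rewrite r1 r2.
Qed.
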